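(* Let $G$ and $H$ be finite sequences of non-negative integers, each having at least one nonzero entry, with $\langle G\rangle=\langle H\rangle$. Then some permutation of $G$ is telescopic if and only if some permutation of $H$ is telescopic.
   Context: For a finite sequence $G=(g_1,\dots,g_k)\in\mathbb{N}_0^k$, $\langle G\rangle$ is the set of $\mathbb{N}_0$-linear combinations of its entries. With $G_i=(g_1,\dots,g_i)$ and $d_i=\gcd(G_i)$, for $G$ with $g_1>0$ if $k=1$ and $g_1+g_2>0$ if $k\ge2$, set $c_j=d_{j-1}/d_j$ ($2\le j\le k$); $G$ is telescopic if $c_jg_j\in\langle G_{j-1}\rangle$ for all $2\le j\le k$. A permutation of $G$ is $(g_{\sigma(1)},\dots,g_{\sigma(k)})$ for $\sigma$ in the symmetric group on $k$ letters. *)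

(* Defs.v *)
From mathcomp Require Import all_boot.
Set Implicit Arguments. Unset Strict Implicit. Unset Printing Implicit Defensive.

Definition in_sg (G : seq nat) (n : nat) : Prop :=
  exists c : seq nat, size c = size G /\
    n = \sum_(i < size G) nth 0 c i * nth 0 G i.

Definition dpre (G : seq nat) (i : nat) : nat :=
  \big[gcdn/0]_(x <- take i G) x.

(* Standing well-definedness condition: g_1 > 0 if k = 1, g_1 + g_2 > 0 if k >= 2. *)
Definition tele_cond (G : seq nat) : Prop :=
  (size G = 1 /\ 0 < nth 0 G 0) \/ (2 <= size G /\ 0 < nth 0 G 0 + nth 0 G 1).

(* G is telescopic: c_j g_j in <G_{j-1}> for 2 <= j <= k, with c_j = d_{j-1}/d_j.
   (1-based index j corresponds to nth 0 G (j-1).) *)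
Definition telescopic (G : seq nat) : Prop :=
  tele_cond G /\
  forall j, 2 <= j <= size G ->
    in_sg (take j.-1 G) ((dpre G j.-1 %/ dpre G j) * nth 0 G j.-1).

(* Main.v *)
Require Import Defs.
From mathcomp Require Import all_boot all_order zify.
From Stdlib Require Import Classical.
Set Implicit Arguments. Unset Strict Implicit. Unset Printing Implicit Defensive.

Fixpoint sg (L : seq nat) (n : nat) : Prop :=
  match L with [::] => n = 0 | x :: L' => exists a m, sg L' m /\ n = a * x + m end.

Lemma sg0 L : sg L 0.
Proof. elim: L => //= x L IH; exists 0, 0; split => //. Qed.

Lemma sgD L a b : sg L a -> sg L b -> sg L (a + b).
Proof.
elim: L a b => [|x L IH] a b /=; first by move=> -> ->.
move=> [a1 [m1 [H1 ->]]] [a2 [m2 [H2 ->]]]; exists (a1 + a2), (m1 + m2).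
split; first exact: IH. by rewrite mulnDl -!addnA (addnCA m1).
Qed.

Lemma sgM L k a : sg L a -> sg L (k * a).
Proof. move=> H; elim: k => [|k IH]; first exact: sg0. by rewrite mulSn; apply: sgD. Qed.

Lemma sg_mem L x : x \in L -> sg L x.
Proof.
elim: L => [|y L IH] //=; rewrite inE => /orP [/eqP ->|/IH H].
  by exists 1, 0; split; [exact: sg0| rewrite mul1n addn0].
by exists 0, x.
Qed.

Lemma sg_sub L L' : (forall x, x \in L -> sg L' x) -> forall n, sg L n -> sg L' n.
Proof.
elim: L => [|x L IH] H n /=; first by move=> ->; exact: sg0.
move=> [a [m [Hm ->]]]; apply: sgD; first by apply: sgM; apply: H; rewrite inE eqxx.
by apply: IH => // y Hy; apply: H; rewrite inE Hy orbT.
Qed.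

Lemma sg_eq L L' : (forall x, x \in L -> sg L' x) -> (forall x, x \in L' -> sg L x) ->
  forall n, sg L n <-> sg L' n.
Proof. by move=> H1 H2 n; split; apply: sg_sub. Qed.

Lemma sg_perm L L' : perm_eq L L' -> forall n, sg L n <-> sg L' n.
Proof.
move=> P; apply: sg_eq => x Hx; apply: sg_mem; by rewrite ?(perm_mem P) // -(perm_mem P).
Qed.

Lemma sg_mid A x B n : sg (A ++ x :: B) n <-> exists a m, sg (A ++ B) m /\ n = a * x + m.
Proof.
have P : perm_eq (A ++ x :: B) (x :: (A ++ B)).
  by rewrite -cat1s perm_catCA.
by rewrite (sg_perm P).
Qed.

Lemma in_sgE L n : in_sg L n <-> sg L n.
Proof.
rewrite /in_sg; elim: L n => [|x L IH] n /=.
  split; first by move=> [c [_ ->]]; rewrite big_ord0.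
  by move=> ->; exists [::]; rewrite big_ord0.
split.
  move=> [[|a c] [//= [Hs] ->]]; rewrite big_ord_recl /=.
  exists a, (\sum_(i < size L) nth 0 c i * nth 0 L i); split; last first.
    by congr (_ + _); apply: eq_bigr => i _; rewrite lift0.
  by apply/IH; exists c.
move=> [a [m [/IH [c [Hs ->]] ->]]]; exists (a :: c); split; first by rewrite /= Hs.
rewrite big_ord_recl /=; congr (_ + _); apply: eq_bigr => i _; by rewrite lift0.
Qed.

Definition gl (L : seq nat) := foldr gcdn 0 L.

Lemma gl_cat A B : gl (A ++ B) = gcdn (gl A) (gl B).
Proof. elim: A => [|x A IH] /=; by rewrite ?gcd0n // IH gcdnA. Qed.

Lemma gl_sg L n : sg L n -> gl L %| n.
Proof.
elim: L n => [|x L IH] n /=; first by move=> ->.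
move=> [a [m [Hm ->]]]; apply: dvdn_add; first exact/dvdn_mull/dvdn_gcdl.
exact: dvdn_trans (dvdn_gcdr _ _) (IH _ Hm).
Qed.

Lemma dvd_gl d L : (forall x, x \in L -> d %| x) -> d %| gl L.
Proof.
elim: L => [|x L IH] H //=; rewrite dvdn_gcd H ?inE ?eqxx //= IH // => y Hy.
by apply: H; rewrite inE Hy orbT.
Qed.

Lemma gl_le L L' : (forall n, sg L n -> sg L' n) -> gl L' %| gl L.
Proof. move=> H; apply: dvd_gl => x Hx; apply/gl_sg/H/sg_mem. exact: Hx. Qed.

Lemma gl_eq L L' : (forall n, sg L n <-> sg L' n) -> gl L = gl L'.
Proof.
move=> H; apply/eqP; rewrite eqn_dvd; apply/andP; split; apply: gl_le => n; by rewrite H.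
Qed.

Lemma dpreE G i : dpre G i = gl (take i G).
Proof. rewrite /dpre; elim: (take i G) => [|x s IH]; by rewrite ?big_nil ?big_cons //= IH. Qed.

Lemma NT1 D y a : 0 < gcdn D y -> D %| a * y -> (D %/ gcdn D y) %| a.
Proof.
move=> g0 H.
have H2 : D %| a * gcdn D y by rewrite muln_gcdr dvdn_gcd dvdn_mull.
rewrite -(dvdn_pmul2r g0) divnK ?dvdn_gcdl //.
Qed.

Lemma NT2 D y : D %| (D %/ gcdn D y) * y.
Proof. by rewrite mulnC gcdnC muln_divCA_gcd dvdn_mulr. Qed.

Lemma NT_lcm D y : (D %/ gcdn D y) * y = lcmn D y.
Proof. by rewrite /lcmn divn_mulAC ?dvdn_gcdl. Qed.

Lemma NT3 D d y s : D %| d -> d %| lcmn D y -> D %| s -> gcdn d y %| s -> d %| s.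
Proof.
move=> H1 H2 H3 H4.
have E : gcdn (lcmn D y) d = lcmn (gcdn D d) (gcdn y d) := Order.NatDvd.meetUl _ _ _.
move: E; rewrite (gcdn_idPr H2) (gcdn_idPl H1) => ->.
by rewrite dvdn_lcm H3 gcdnC H4.
Qed.

Definition Closed T := forall P Q, T = P ++ Q -> forall n, sg T n -> gl P %| n -> sg P n.

Lemma rep T W y Z : telescopic T -> T = W ++ y :: Z -> W != [::] ->
  forall n, sg (W ++ [:: y]) n -> gl W %| n -> sg W n.
Proof.
move=> [_ Ht] E W0 n Hn Hd.
have Hs : 2 <= (size W).+1 <= size T.
  by rewrite E size_cat /= ltnS lt0n size_eq0 W0 /= addnS ltnS leq_addr.
move: (Ht _ Hs) => /=; rewrite in_sgE !dpreE E take_size_cat //.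
rewrite take_cat ltnNge leqnSn /= subSnn /= nth_cat ltnn subnn /= take0 gl_cat /= gcdn0.
set D := gl W in Hd * => Hc.
move: ((sg_mid W y [::] n).1 Hn) => [a [m [Hm Hnm]]]; rewrite cats0 in Hm.
rewrite Hnm in Hd *.
case: (posnP D) => [D0|Dp].
  by move: Hd; rewrite D0 dvd0n => /eqP ->; exact: sg0.
have g0 : 0 < gcdn D y by rewrite gcdn_gt0 Dp.
have Hay : D %| a * y by move: Hd; rewrite dvdn_addl // gl_sg.
move: (NT1 g0 Hay) => /dvdnP [k ->].
apply: sgD => //; rewrite -mulnA; exact: sgM.
Qed.

Lemma tele_closed T : telescopic T -> Closed T.
Proof.
move=> Ht P Q E n Hn Hd.
case: (eqVneq P [::]) => [P0|P0].
  by move: Hd; rewrite P0 /= dvd0n => /eqP.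
suff K : forall Q1 Q2, T = P ++ Q1 ++ Q2 -> sg (P ++ Q1) n -> sg P n.
  by apply: (K Q [::]); rewrite ?cats0 // -E.
elim/last_ind => [|Q1 y IH] Q2 E2; first by rewrite cats0.
rewrite -cats1 catA => H; apply: (IH (y :: Q2)).
  by rewrite E2 -cats1 -!catA.
apply: (rep Ht (W := P ++ Q1) (y := y) (Z := Q2)) => //.
- by rewrite E2 -cats1 -!catA.
- by rewrite -size_eq0 size_cat addn_eq0 negb_and size_eq0 P0.
- by rewrite gl_cat; apply: dvdn_trans Hd; exact: dvdn_gcdl.
Qed.

Lemma tcond_nth T : 0 < size T -> 0 < nth 0 T 0 -> tele_cond T.
Proof.
rewrite /tele_cond; case: T => [|a [|b T]] //= _ Ha; first by left.
by right; split => //; rewrite ltn_addr.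
Qed.

Lemma closed_tele T : tele_cond T -> Closed T -> telescopic T.
Proof.
move=> Hc HC; split => // j /andP [Hj1 Hj2].
rewrite in_sgE !dpreE.
have Hi : j.-1 < size T by rewrite prednK // ltnW.
have E : take j T = take j.-1 T ++ [:: nth 0 T j.-1].
  by rewrite -{1}(prednK (ltnW Hj1)) (take_nth 0 Hi) cats1.
rewrite E gl_cat /= gcdn0.
apply: (HC _ (drop j.-1 T)); first by rewrite cat_take_drop.
  apply: sgM; apply: sg_mem; exact: mem_nth.
exact: NT2.
Qed.

Lemma cat_split (A B C D : seq nat) : A ++ B = C ++ D ->
  (exists X, A = C ++ X /\ D = X ++ B) \/ (exists X, C = A ++ X /\ B = X ++ D).
Proof.
elim: A C => [|a A IH] [|c C] /=.
- by move=> E; right; exists [::].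
- by move=> E; right; exists (c :: C).
- by move=> E; left; exists (a :: A).
- move=> [-> /IH [[X [-> ->]]|[X [-> ->]]]]; [left|right]; by exists X.
Qed.

Lemma sg_ins A x B : sg (A ++ B) x -> forall n, sg (A ++ x :: B) n <-> sg (A ++ B) n.
Proof.
move=> Hx n; split.
  by move/sg_mid => [a [m [Hm ->]]]; apply: sgD => //; apply: sgM.
apply: sg_sub => y; rewrite mem_cat => /orP [H|H]; apply: sg_mem; rewrite mem_cat.
  by rewrite H.
by rewrite inE H !orbT.

Qed.

Lemma sg_subl L L' n : {subset L <= L'} -> sg L n -> sg L' n.
Proof. move=> H; apply: sg_sub => y Hy; apply: sg_mem; exact: H. Qed.

Lemma closed_app T R : Closed T -> (forall x, x \in R -> sg T x) -> Closed (T ++ R).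
Proof.
move=> HC HR P Q E n Hn Hd.
have HnT : sg T n.
  apply: (sg_sub _ Hn) => y; rewrite mem_cat => /orP [H|H]; last exact: HR.
  exact: sg_mem.
case: (cat_split E) => [[X [EX _]]|[X [EX _]]].
  exact: (HC P X EX).
by rewrite EX; apply: sg_subl HnT => y Hy; rewrite mem_cat Hy.
Qed.

Lemma split_min A x B : ~ sg A x -> sg (A ++ B) x ->
  exists C y E, B = C ++ y :: E /\ ~ sg (A ++ C) x /\ sg (A ++ C ++ [:: y]) x.
Proof.
move=> H0; elim/last_ind: B => [|B z IH]; first by rewrite cats0.
move=> H1; case: (classic (sg (A ++ B) x)) => H2.
  move: (IH H2) => [C [y [E [-> [H3 H4]]]]].
  by exists C, y, (rcons E z); split => //; rewrite rcons_cat.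
by exists B, z, [::]; rewrite cats1; split => //; rewrite -cats1.
Qed.

Lemma sg_memeq L L' : (forall z, (z \in L) = (z \in L')) -> forall n, sg L n <-> sg L' n.
Proof. move=> H; apply: sg_eq => z Hz; apply: sg_mem; by rewrite ?H // -H. Qed.

Lemma removal A x B : Closed (A ++ x :: B) -> sg (A ++ B) x ->
  exists T', Closed T' /\ size T' < size (A ++ x :: B) /\
    (forall n, sg T' n <-> sg (A ++ x :: B) n).
Proof.
move=> HC Hx.
case: (classic (sg A x)) => HA.
  exists (A ++ B); split; last split.
  - move=> P Q E n Hn Hd.
    have HnT : sg (A ++ x :: B) n by apply/(sg_ins Hx).
    case: (cat_split E) => [[X [EA EQ]]|[X [EP EB]]].
      by apply: (HC P (X ++ x :: B)) => //; rewrite EA -catA.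
    have HX : sg (A ++ X) x by apply: sg_subl HA => y Hy; rewrite mem_cat Hy.
    have EQv := sg_ins HX.
    rewrite EP; apply/EQv.
    apply: (HC (A ++ x :: X) Q) => //; first by rewrite EB -catA.
    by rewrite (gl_eq EQv) -EP.
  - by rewrite !size_cat /= addnS.
  - by move=> n; rewrite (sg_ins Hx).
move: (split_min HA Hx) => [C [y [E [EB [HnC HyC]]]]].
rewrite EB in HC Hx *.
have x0 : 0 < x.
  rewrite lt0n; apply/negP => /eqP x0; apply: HnC; rewrite x0; exact: sg0.
set W := A ++ x :: C.
have ET : A ++ x :: (C ++ y :: E) = W ++ y :: E by rewrite /W -catA.
rewrite ET in HC.
set D := gl W.
have DX : D %| x by apply: gl_sg; apply: sg_mem; rewrite mem_cat inE eqxx orbT.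
have Dp : 0 < D := dvdn_gt0 x0 DX.
set c := D %/ gcdn D y.
have Hcy : sg W (c * y).
  apply: (HC W (y :: E)) => //; last exact: NT2.
  by apply: sgM; apply: sg_mem; rewrite mem_cat inE eqxx orbT.
rewrite catA in HyC.
move: ((sg_mid (A ++ C) y [::] x).1 HyC) => [a [s [Hs Ex]]]; rewrite cats0 in Hs.
have HsW : sg W s by apply: sg_subl Hs => z; rewrite /W !mem_cat inE => /orP [->|->] //; rewrite !orbT.
have DS : D %| s by apply: gl_sg.
have Day : D %| a * y by move: DX; rewrite Ex dvdn_addl.
have g0 : 0 < gcdn D y by rewrite gcdn_gt0 Dp.
move: (NT1 g0 Day) => /dvdnP [a' Ea]; rewrite -/c in Ea.
move: ((sg_mid A x C (c * y)).1 Hcy) => [b [s' [Hs' Ecy]]].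
have a'0 : 0 < a'.
  rewrite lt0n; apply/negP => /eqP a0; apply: HnC.
  by move: Ex; rewrite Ea a0 /= => ->.
have b0 : 0 < b.
  rewrite lt0n; apply/negP => /eqP b0; apply: HnC.
  rewrite Ex Ea -mulnA Ecy b0 /=; apply: sgD => //; exact: sgM.
have Ex2 : c * y = x.
  have E3 : x = a' * (b * x + s') + s by rewrite {1}Ex Ea -mulnA Ecy.
  have k1 := leq_pmull (b * x + s') a'0. have k2 := leq_pmull x b0. lia.
have sg_swap : forall A C E n, sg (A ++ C ++ y :: E) n <-> sg (A ++ y :: C ++ E) n.
  move=> A1 C1 E1; apply: sg_memeq => z; rewrite !(mem_cat, inE).
  by case: (z \in A1); case: (z \in C1); case: (z == y).
have Hsx : forall n, sg (W ++ y :: E) n <-> sg (A ++ y :: C ++ E) n.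
  move=> n; rewrite -ET (sg_ins (A := A) (x := x) (B := C ++ y :: E)) ?sg_swap //.
  by rewrite -Ex2; apply: sgM; apply: sg_mem; rewrite !(mem_cat, inE) eqxx !orbT.
exists (A ++ y :: C ++ E); split; last split.
- move=> P' Q' EP n Hn Hd.
  have HnT : sg (W ++ y :: E) n by apply/Hsx.
  case: (cat_split EP) => [[X [EA EQ]]|[X [EP' EY]]].
    by apply: (HC P' (X ++ x :: C ++ y :: E)) => //; rewrite /W EA -!catA.
  case: X EP' EY => [|y' X'] EP' EY.
    rewrite cats0 in EP'; apply: (HC P' (x :: C ++ y :: E)) => //.
    by rewrite /W EP' -catA.
  case: EY => Ey EY'; rewrite -Ey {y' Ey} in EP'.
  case: (cat_split EY') => [[X2 [EC EQ2]]|[X3 [EX' EE]]].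
  + set Qp := A ++ x :: X'.
    have EW : W = Qp ++ X2 by rewrite /W /Qp EC -catA.
    have HP' : forall m, sg P' m <-> sg (y :: Qp) m.
      move=> m; rewrite EP' -(sg_ins (A := A) (x := x) (B := y :: X')).
        apply: sg_memeq => z; rewrite /Qp !(mem_cat, inE).
        by case: (z \in A); case: (z \in X'); case: (z == y); case: (z == x).
      by rewrite -Ex2; apply: sgM; apply: sg_mem; rewrite !(mem_cat, inE) eqxx !orbT.
    have glP : gl P' = gcdn y (gl Qp) by rewrite (gl_eq HP').
    have Hn1 : sg (W ++ [:: y]) n.
      apply: (HC (W ++ [:: y]) E) => //; first by rewrite -catA.
      rewrite gl_cat /= gcdn0; apply: dvdn_trans Hd; rewrite glP.
      rewrite dvdn_gcd dvdn_gcdr /= EW gl_cat.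
      exact: dvdn_trans (dvdn_gcdl _ _) (dvdn_gcdl _ _).
    move: ((sg_mid W y [::] n).1 Hn1) => [a2 [s2 [Hs2 En]]]; rewrite cats0 in Hs2.
    have Hs2d : gl Qp %| s2.
      apply: (NT3 (D := D) (y := y)).
      - by rewrite /D EW gl_cat dvdn_gcdl.
      - rewrite -NT_lcm -/c Ex2; apply: gl_sg; apply: sg_mem.
        by rewrite /Qp mem_cat inE eqxx orbT.
      - exact: gl_sg.
      - move: Hd; rewrite glP En gcdnC dvdn_addr //.
        exact: dvdn_mull (dvdn_gcdr _ _).
    have Hs4 : sg Qp s2.
      apply: (HC Qp (X2 ++ y :: E)) => //; first by rewrite EW -catA.
      by apply: sg_subl Hs2 => z Hz; rewrite mem_cat Hz.
    rewrite En; apply/HP'; apply: sgD.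
      by apply: sgM; apply: sg_mem; exact: mem_head.
    by apply: sg_subl Hs4 => z Hz; rewrite inE Hz orbT.
  + have HPP : forall m, sg (A ++ x :: C ++ y :: X3) m <-> sg P' m.
      move=> m; rewrite EP' EX' (sg_ins (A := A) (x := x) (B := C ++ y :: X3)) ?sg_swap //.
      by rewrite -Ex2; apply: sgM; apply: sg_mem; rewrite !(mem_cat, inE) eqxx !orbT.
    apply/HPP; apply: (HC (A ++ x :: C ++ y :: X3) Q') => //.
      by rewrite /W EE -!catA /= -!catA.
    by rewrite (gl_eq HPP).
- rewrite !size_cat /= !size_cat /=; lia.
- by move=> n; rewrite -Hsx ET.
Qed.

Definition Irr M := forall A x B, M = A ++ x :: B -> ~ sg (A ++ B) x.

Lemma reduce n T : size T <= n -> Closed T ->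
  exists M, Closed M /\ Irr M /\ (forall m, sg M m <-> sg T m).
Proof.
elim: n T => [|n IH] T Hs HC.
  move: Hs HC; rewrite leqn0 size_eq0 => /eqP -> HC; exists [::]; split => //; split => //.
  by rewrite /Irr; case.
case: (classic (Irr T)) => HI; first by exists T.
have [A [x [B [ET Hx]]]] : exists A x B, T = A ++ x :: B /\ sg (A ++ B) x.
  apply: NNPP => Hn; apply: HI => A x B ET Hx; apply: Hn; by exists A, x, B.
rewrite ET in HC Hs.
move: (removal HC Hx) => [T' [HC' [Hs' HE]]].
have Hs2 : size T' <= n by rewrite -ltnS; apply: leq_trans Hs' Hs.
move: (IH T' Hs2 HC') => [M [HM [HIM HEM]]].
exists M; split => //; split => // m; by rewrite HEM HE ET.
Qed.

Lemma mem_split (M : seq nat) x : x \in M -> exists A B, M = A ++ x :: B.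
Proof. by case/splitPr => A B; exists A, B. Qed.

Lemma irr_pos M : Irr M -> forall x, x \in M -> 0 < x.
Proof.
move=> HI x /mem_split [A [B EM]]; rewrite lt0n; apply/negP => /eqP x0.
by apply: (HI A x B EM); rewrite x0; exact: sg0.
Qed.

Lemma irr_uniq M : Irr M -> uniq M.
Proof.
move=> HI.
have H : forall A x B, M = A ++ x :: B -> x \notin B.
  move=> A x B EM; apply/negP => Hx; apply: (HI A x B EM); apply: sg_mem.
  by rewrite mem_cat Hx orbT.
elim: M H {HI} => [|x M IH] H //=; apply/andP; split.
  exact: (H [::] x M).
apply: IH => A y B EM; apply: (H (x :: A) y B); by rewrite EM.
Qed.

Lemma sg_small L n : sg L n -> sg (filter (fun h => h <= n) L) n.
Proof.
elim: L n => [|h L IH] n /=; first by [].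
move=> [a [m [Hm En]]].
have Hmn : m <= n by rewrite En leq_addl.
have Hm' : sg (filter (fun h => h <= n) L) m.
  apply: sg_subl (IH _ Hm) => z; rewrite !mem_filter => /andP [H1 ->].
  by rewrite (leq_trans H1 Hmn).
case: leqP => Hh; first by exists a, m.
case: a En => [|a] En; first by move: Hm'; rewrite En mul0n add0n.
by move: Hh; rewrite En mulSn -addnA ltnNge leq_addr.
Qed.

Lemma in_H M H : Irr M -> (forall m, sg M m <-> sg H m) -> {subset M <= H}.
Proof.
move=> HI HE x Hx; case Hxh: (x \in H) => //; exfalso.
move: (mem_split Hx) => [A [B EM]]; apply: (HI A x B EM).
have := sg_small (proj1 (HE x) (sg_mem Hx)).
apply: sg_sub => z; rewrite mem_filter => /andP [Hzx HzH].
have Hz : z < x.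
  rewrite ltn_neqAle Hzx andbT; apply/negP => /eqP Ez; by rewrite -Ez HzH in Hxh.
have := sg_small (proj2 (HE z) (sg_mem HzH)).
apply: sg_subl => w; rewrite mem_filter => /andP [Hwz HwM].
move: HwM; rewrite EM !mem_cat inE => /orP [->//|/orP [/eqP Ew|->]]; last by rewrite orbT.
by move: (leq_ltn_trans Hwz Hz); rewrite Ew ltnn.
Qed.

Lemma embed (M H : seq nat) : uniq M -> {subset M <= H} -> exists R, perm_eq H (M ++ R).
Proof.
elim: M H => [|x M IH] H /=; first by move=> _ _; exists H.
move=> /andP [HxM HuM] Hsub.
have HxH : x \in H by apply: Hsub; exact: mem_head.
have P1 := perm_to_rem HxH.
have Hsub2 : {subset M <= rem x H}.
  move=> z Hz; have : z \in x :: rem x H by rewrite -(perm_mem P1) Hsub // inE Hz orbT.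
  rewrite inE => /orP [/eqP Ez|//]; by rewrite -Ez Hz in HxM.
move: (IH _ HuM Hsub2) => [R HR]; exists R.
by apply: perm_trans P1 _; rewrite /= perm_cons.
Qed.

Lemma dir G H : has (fun x => 0 < x) H -> (forall n, in_sg G n <-> in_sg H n) ->
  (exists G', perm_eq G G' /\ telescopic G') -> exists H', perm_eq H H' /\ telescopic H'.
Proof.
move=> Hpos HGH [G' [PG Ht]].
move: (reduce (leqnn _) (tele_closed Ht)) => [M [HC [HI HE]]].
have HMH : forall m, sg M m <-> sg H m.
  by move=> m; rewrite HE -(sg_perm PG) -!in_sgE.
move: (embed (irr_uniq HI) (in_H HI HMH)) => [R PR].
exists (M ++ R); split => //.
apply: closed_tele.
  move: Hpos => /hasP [h Hh h0].
  case: M HC HI HE HMH PR => [|m0 M] HC HI HE HMH PR.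
    by move: (proj2 (HMH h) (sg_mem Hh)) => /= E; rewrite E in h0.
  apply: tcond_nth => //=; apply: (irr_pos HI); exact: mem_head.
apply: closed_app => // z Hz; apply/HMH; apply: sg_mem.
by rewrite (perm_mem PR) mem_cat Hz orbT.
Qed.

Theorem mainTheorem3 (G H : seq nat) :
  has (fun x => 0 < x) G -> has (fun x => 0 < x) H ->
  (forall n, in_sg G n <-> in_sg H n) ->
  ((exists G', perm_eq G G' /\ telescopic G') <->
   (exists H', perm_eq H H' /\ telescopic H')).
Proof.
move=> HG HH HGH; split; first exact: dir.
apply: dir => // n; by rewrite HGH.
Qed.
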